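(* Let $K$ be a finite connected two-dimensional CW complex whose fundamental group $\Pi$ has a presentation $\langle x_1,\ldots,x_n\mid r_1,\ldots,r_m\rangle$ such that $K$ is homotopy equivalent to the model two-complex of this presentation. Suppose $H^2(K;\mathbb{Z})$ is finite of odd order. Then $m\leq n$, $\hom(\Pi;\mathbb{Z}_2)\cong\mathbb{Z}_2^{\,n-m}$, and every $\alpha\in\hom(\Pi;\mathbb{Z}_2)$ lifts through the natural epimorphism $\mathfrak{q}:\mathbb{Z}\to\mathbb{Z}_2$, i.e. there is a homomorphism $\tilde\alpha:\Pi\to\mathbb{Z}$ with $\mathfrak{q}\circ\tilde\alpha=\alpha$.
   Context: The model two-complex of a presentation has one $0$-cell, one $1$-cell for each generator and one $2$-cell for each relator attached along that relator word. $\mathbb{Z}_2$ denotes the cyclic group of order two. *)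

(* Defs.v *)
From HB Require Import structures.
From mathcomp Require Import all_boot all_order all_algebra.
Set Implicit Arguments. Unset Strict Implicit. Unset Printing Implicit Defensive.
Import Order.TTheory GRing.Theory Num.Theory.
Local Open Scope ring_scope.

(* A word in the generators x_0..x_{n-1}: a list of letters (i, inv),
   meaning x_i if inv = false and x_i^{-1} if inv = true. *)
Definition word (n : nat) := seq ('I_n * bool).

Definition weval (A : zmodType) (n : nat) (phi : 'I_n -> A) (w : word n) : A :=
  \sum_(l <- w) (if l.2 then - phi l.1 else phi l.1).

(* Homomorphisms Pi -> A, Pi = < x_1..x_n | r_1..r_m >, A abelian:
   assignments of the generators killing every relator. *)
Definition is_hom (A : zmodType) (n m : nat) (rels : 'I_m -> word n)
  (phi : 'I_n -> A) : Prop :=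
  forall j : 'I_m, weval phi (rels j) = 0.

Definition homZ2 (n m : nat) (rels : 'I_m -> word n) : {set {ffun 'I_n -> 'Z_2}} :=
  [set phi : {ffun 'I_n -> 'Z_2} | [forall j : 'I_m, weval phi (rels j) == 0]].

(* Cellular cochain complex of the model two-complex with Z coefficients:
   C^1 = Z^n (functions on 1-cells), C^2 = Z^m (functions on 2-cells);
   the coboundary d^1 f evaluated on the 2-cell of r_j is the sum over
   the letters of r_j of +- f(x_i) (incidence numbers = exponent sums). *)
Definition cobound1 (n m : nat) (rels : 'I_m -> word n) (f : 'I_n -> int)
  : 'I_m -> int := fun j => weval f (rels j).

Definition cong2 (n m : nat) (rels : 'I_m -> word n) (u v : 'I_m -> int) : Prop :=
  exists f : 'I_n -> int, forall j, u j - v j = cobound1 rels f j.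

(* H^2(K;Z) = C^2 / im d^1 (d^2 = 0 in a 2-complex) is finite of order N:
   there are N pairwise distinct cosets covering C^2. *)
Definition H2_card (n m : nat) (rels : 'I_m -> word n) (N : nat) : Prop :=
  exists reps : 'I_N -> ('I_m -> int),
    (forall a b : 'I_N, cong2 rels (reps a) (reps b) -> a = b) /\
    (forall u : 'I_m -> int, exists a : 'I_N, cong2 rels u (reps a)).

(* Main.v *)
Require Import Defs.
From HB Require Import structures.
From mathcomp Require Import all_boot all_order all_algebra ring.
From Stdlib Require Import ClassicalEpsilon.
Import GRing.Theory.
Local Open Scope ring_scope.
Set Implicit Arguments. Unset Strict Implicit.

Lemma weval_nil (A : zmodType) n (phi : 'I_n -> A) : weval phi [::] = 0.
Proof. by rewrite /weval big_nil. Qed.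

Lemma weval_cons (A : zmodType) n (phi : 'I_n -> A) l w :
  weval phi (l :: w) = (if l.2 then - phi l.1 else phi l.1) + weval phi w.
Proof. by rewrite /weval big_cons. Qed.

Lemma weval_ext (A : zmodType) n (f g : 'I_n -> A) w :
  (forall i, f i = g i) -> weval f w = weval g w.
Proof. by move=> E; apply: eq_bigr => l _; rewrite E. Qed.

Lemma weval_add (A : zmodType) n (f g : 'I_n -> A) w :
  weval (fun i => f i + g i) w = weval f w + weval g w.
Proof.
elim: w => [|l w IH]; first by rewrite !weval_nil addr0.
rewrite !weval_cons IH; case: l.2; rewrite ?opprD; 
  by rewrite addrACA.
Qed.

Lemma weval_opp (A : zmodType) n (f : 'I_n -> A) w :
  weval (fun i => - f i) w = - weval f w.
Proof.
elim: w => [|l w IH]; first by rewrite !weval_nil oppr0.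
by rewrite !weval_cons IH opprD; case: l.2; rewrite ?opprK.
Qed.

Lemma weval_mulz n (f : 'I_n -> int) (k : int) w :
  weval (fun i => k * f i) w = k * weval f w.
Proof.
elim: w => [|l w IH]; first by rewrite !weval_nil mulr0.
by rewrite !weval_cons IH mulrDr; case: l.2; rewrite ?mulrN.
Qed.

Lemma weval_intr (R : pzRingType) n (g : 'I_n -> int) w :
  weval (fun i => (g i)%:~R : R) w = (weval g w)%:~R.
Proof.
elim: w => [|l w IH]; first by rewrite !weval_nil.
by rewrite !weval_cons IH intrD; case: l.2; rewrite ?intrN.
Qed.

Definition ecoef n (w : word n) (i : 'I_n) : int := weval (fun k => ((k == i) : nat)%:Z) w.
Arguments ecoef {n}.

Lemma sum_delta (A : zmodType) n (F : 'I_n -> A) k :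
  \sum_i F i *~ ((k == i) : nat)%:Z = F k.
Proof.
rewrite (bigD1 k) //= eqxx big1 ?addr0 // => i /negbTE.
by rewrite eq_sym => ->.
Qed.

Lemma weval_lin (A : zmodType) n (phi : 'I_n -> A) w :
  weval phi w = \sum_i phi i *~ ecoef w i.
Proof.
elim: w => [|l w IH].
  by rewrite weval_nil big1 // => i _; rewrite /ecoef weval_nil mulr0z.
rewrite weval_cons IH /ecoef.
under [RHS]eq_bigr => i _ do rewrite weval_cons mulrzDr.
rewrite big_split /=; congr (_ + _).
case: l.2; last by rewrite sum_delta.
under eq_bigr => i _ do rewrite mulrNz.
by rewrite sumrN sum_delta.
Qed.

Lemma weval_linr (R : pzRingType) n (phi : 'I_n -> R) w :
  weval phi w = \sum_i phi i * (ecoef w i)%:~R.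
Proof. by rewrite weval_lin; apply: eq_bigr => i _; rewrite mulrzr. Qed.
Lemma invol_even N (s : 'I_N -> 'I_N) :
  (forall a, s a != a) -> (forall a, s (s a) = a) -> ~~ odd N.
Proof.
move=> Hne Hss.
pose A := [set a : 'I_N | (a < s a)%N].
have sinj : injective s by apply: (can_inj Hss).
have HC : ~: A = s @: A.
  apply/setP => x; rewrite !inE.
  apply/idP/imsetP.
    move=> Hx; exists (s x); last by rewrite Hss.
    rewrite inE Hss; move: (Hne x); rewrite neq_ltn (negbTE Hx) orbF.
    by [].
  case=> y; rewrite inE => Hy ->; rewrite Hss -leqNgt ltnW //.
have := cardsC A; rewrite HC card_imset // card_ord => <-.
by rewrite addnn odd_double.
Qed.

Definition imD n m (rels : 'I_m -> word n) (u : 'I_m -> int) : Prop :=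
  exists f : 'I_n -> int, forall j, u j = cobound1 rels f j.

Lemma cobound1_add n m (rels : 'I_m -> word n) f g j :
  cobound1 rels (fun i => f i + g i) j = cobound1 rels f j + cobound1 rels g j.
Proof. exact: weval_add. Qed.

Lemma imD_ext n m (rels : 'I_m -> word n) u u' :
  (forall j, u j = u' j) -> imD rels u -> imD rels u'.
Proof. by move=> E [f Hf]; exists f => j; rewrite -E. Qed.

Lemma imDD n m (rels : 'I_m -> word n) u v :
  imD rels u -> imD rels v -> imD rels (fun j => u j + v j).
Proof.
move=> [f Hf] [g Hg]; exists (fun i => f i + g i) => j.
by rewrite cobound1_add Hf Hg.
Qed.

Lemma imDN n m (rels : 'I_m -> word n) u :
  imD rels u -> imD rels (fun j => - u j).
Proof.
move=> [f Hf]; exists (fun i => - f i) => j.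
by rewrite /cobound1 weval_opp -/(cobound1 rels f j) Hf.
Qed.

Lemma imDM n m (rels : 'I_m -> word n) (k : int) u :
  imD rels u -> imD rels (fun j => k * u j).
Proof.
move=> [f Hf]; exists (fun i => k * f i) => j.
by rewrite /cobound1 weval_mulz -/(cobound1 rels f j) Hf.
Qed.

Lemma cong_imD n m (rels : 'I_m -> word n) u v :
  cong2 rels u v <-> imD rels (fun j => u j - v j).
Proof. by []. Qed.

Lemma key2 n m (rels : 'I_m -> word n) N (v : 'I_m -> int) :
  odd N -> H2_card rels N ->
  imD rels (fun j => 2%:Z * v j) -> ~ imD rels v -> False.
Proof.
move=> oN [reps [Hinj Hcov]] H2 Hv.
pose s a := sval (constructive_indefinite_description _
                   (Hcov (fun j => reps a j + v j))).
have Hs a : cong2 rels (fun j => reps a j + v j) (reps (s a)).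
  by rewrite /s; case: constructive_indefinite_description.
have Hne a : s a != a.
  apply/negP => /eqP E; apply: Hv; have := Hs a; rewrite E cong_imD.
  by apply: imD_ext => j; ring.
have Hss a : s (s a) = a.
  apply/esym; apply: Hinj; apply/cong_imD.
  have := imDD (imDD (Hs a) (Hs (s a))) (imDN H2).
  rewrite /=; apply: imD_ext => j /=.
  ring.
by move/negP: (invol_even Hne Hss); apply.
Qed.

Lemma key1 n m (rels : 'I_m -> word n) N (u : 'I_m -> int) :
  odd N -> H2_card rels N ->
  exists k : nat, odd k /\ imD rels (fun j => k%:Z * u j).
Proof.
move=> oN HN; have [reps [Hinj Hcov]] := HN.
have [d [d0 Hd]] : exists d : nat, (0 < d)%N /\ imD rels (fun j => d%:Z * u j).
  pose t (k : 'I_N.+1) := sval (constructive_indefinite_description _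
                   (Hcov (fun j => (k : nat)%:Z * u j))).
  have Ht (k : 'I_N.+1) : cong2 rels (fun j => (k : nat)%:Z * u j) (reps (t k)).
    by rewrite /t; case: constructive_indefinite_description.
  have : ~~ injectiveb t.
    apply/negP => /injectiveP Hi; have := leq_card _ Hi.
    by rewrite !card_ord ltnn.
  case/injectivePn => k1 [k2 Hne Heq].
  have H12 := imDD (Ht k1) (imDN (Ht k2)); rewrite Heq in H12.
  have H12' : imD rels (fun j => ((k1 : nat)%:Z - (k2 : nat)%:Z) * u j).
    by apply: imD_ext H12 => j /=; ring.
  case: (ltngtP k1 k2) => Hlt; last by move/val_inj: Hlt; move/eqP: Hne.
    exists (k2 - k1)%N; split; first by rewrite subn_gt0.
    have := imDN H12'; apply: imD_ext => j /=; rewrite -(subzn (ltnW Hlt)).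
    ring.
  exists (k1 - k2)%N; split; first by rewrite subn_gt0.
  by apply: imD_ext H12' => j /=; rewrite -(subzn (ltnW Hlt)).
elim: d {-2}d (leqnn d) d0 Hd => [|D IH] d Hle d0 Hd.
  by move: d0; rewrite leqn0 in Hle; rewrite (eqP Hle).
case Od: (odd d); first by exists d.
have Ed : d = (d./2).*2 by rewrite -{1}(odd_double_half d) Od.
have e0 : (0 < d./2)%N by move: d0; rewrite {1}Ed double_gt0.
case: (classic (imD rels (fun j => (d./2)%:Z * u j))) => He.
  apply: (IH _ _ e0 He); rewrite -ltnS; apply: leq_trans Hle.
  rewrite {2}Ed -addnn; move: e0; case: (d./2) => // k _.
  by rewrite addSn ltnS leq_addl.
exfalso; apply: (key2 oN HN _ He).
by apply: imD_ext Hd => j /=; rewrite {1}Ed -addnn PoszD; ring.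
Qed.

Lemma Z2_nat0 (k : nat) : (k%:R : 'Z_2) = 0 -> exists q, k = (2 * q)%N.
Proof.
move/(congr1 (@nat_of_ord _)); rewrite val_Zp_nat //= => Hk.
by exists (k %/ 2)%N; rewrite {1}(divn_eq k 2) Hk addn0 mulnC.
Qed.

Lemma Z2_int0 (x : int) : (x%:~R : 'Z_2) = 0 -> exists y : int, x = 2%:Z * y.
Proof.
case: x => k.
  by move/Z2_nat0 => [q ->]; exists q%:Z; rewrite PoszM.
rewrite NegzE intrN => /eqP; rewrite oppr_eq0 => /eqP /Z2_nat0 [q Hq].
by exists (- q%:Z); rewrite Hq PoszM mulrN.
Qed.

Lemma Z2_odd (k : nat) : odd k -> (k%:R : 'Z_2) = 1.
Proof. by move=> ok; apply: ord_inj; rewrite val_Zp_nat //= modn2 ok. Qed.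

Lemma Z2_two : (2%:R : 'Z_2) = 0.
Proof. by apply: ord_inj; rewrite val_Zp_nat. Qed.

Lemma Z2_natr (x : 'Z_2) : ((x : nat)%:Z)%:~R = x.
Proof. by rewrite -pmulrn natr_Zp. Qed.

Lemma surj2 n m (rels : 'I_m -> word n) N :
  odd N -> H2_card rels N ->
  forall v : 'I_m -> 'Z_2, exists phi : 'I_n -> 'Z_2,
    forall j, weval phi (rels j) = v j.
Proof.
move=> oN HN v.
have [k [ok [g Hg]]] := key1 (fun j => (v j : nat)%:Z) oN HN.
exists (fun i => (g i)%:~R) => j.
rewrite weval_intr -/(cobound1 rels g j) -Hg intrM Z2_natr.
by rewrite -pmulrn Z2_odd // mul1r.
Qed.

Lemma lift2 n m (rels : 'I_m -> word n) N :
  odd N -> H2_card rels N ->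
  forall alpha : 'I_n -> 'Z_2, (forall j, weval alpha (rels j) = 0) ->
  exists beta : 'I_n -> int,
          is_hom rels beta /\ forall i, (beta i)%:~R = alpha i.
Proof.
move=> oN HN alpha Ha.
pose a i := (alpha i : nat)%:Z.
have Hev j : exists y : int, weval a (rels j) = 2%:Z * y.
  apply: Z2_int0; rewrite -weval_intr -(Ha j); apply: weval_ext => i.
  by rewrite Z2_natr.
pose u j := sval (constructive_indefinite_description _ (Hev j)).
have Hu j : weval a (rels j) = 2%:Z * u j.
  by rewrite /u; case: constructive_indefinite_description.
have [k [ok [g Hg]]] := key1 u oN HN.
exists (fun i => k%:Z * a i + - (2%:Z * g i)); split.
  move=> j; rewrite weval_add weval_opp !weval_mulz Hu.
  rewrite -/(cobound1 rels g j) -Hg; ring.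
move=> i; rewrite intrD intrN !intrM Z2_natr -pmulrn Z2_odd // mul1r.
by rewrite -pmulrn Z2_two mul0r subr0.
Qed.

Definition Dm n m (rels : 'I_m -> word n) : 'M['F_2]_(n, m) :=
  \matrix_(i, j) (ecoef (rels j) i)%:~R.

Lemma mulDm n m (rels : 'I_m -> word n) (phi : 'I_n -> 'F_2) j :
  ((\row_i phi i) *m Dm rels) 0 j = weval phi (rels j).
Proof. by rewrite mxE weval_linr; apply: eq_bigr => i _; rewrite !mxE. Qed.

Lemma Dm_full n m (rels : 'I_m -> word n) N :
  odd N -> H2_card rels N -> row_full (Dm rels).
Proof.
move=> oN HN; rewrite -sub1mx; apply/row_subP => j.
have [phi Hphi] := surj2 oN HN (fun j' => (row j 1%:M : 'rV['F_2]_m) 0 j').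
have -> : row j 1%:M = (\row_i (phi i : 'F_2)) *m Dm rels.
  by apply/rowP => j'; rewrite mulDm Hphi.
exact: submxMl.
Qed.

Unset Implicit Arguments.

Theorem lemma3p1 (n m : nat) (rels : 'I_m -> word n) :
  (exists N : nat, odd N /\ H2_card rels N) ->
  [/\ (m <= n)%N,
      (exists f : {ffun 'I_(n - m) -> 'Z_2} -> {ffun 'I_n -> 'Z_2},
          [/\ injective f, {morph f : x y / x + y} &
              forall phi, phi \in homZ2 rels <-> exists x, f x = phi])
    & forall alpha : {ffun 'I_n -> 'Z_2}, alpha \in homZ2 rels ->
        exists beta : 'I_n -> int,
          is_hom rels beta /\ forall i, (beta i)%:~R = alpha i].
Proof.
move=> [N [oN HN]].
have Hfull := Dm_full oN HN.
have Hrk : \rank (Dm rels) = m by apply/eqP.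
split.
- by rewrite -Hrk rank_leq_row.
- pose K := kermx (Dm rels).
  have e : \rank K = (n - m)%N by rewrite mxrank_ker Hrk.
  pose B := row_base K.
  pose rw (x : {ffun 'I_(n - m) -> 'Z_2}) : 'rV['F_2]_(\rank K) :=
     \row_k (x (cast_ord e k) : 'F_2).
  pose f (x : {ffun 'I_(n - m) -> 'Z_2}) : {ffun 'I_n -> 'Z_2} :=
     [ffun i => (rw x *m B) 0 i : 'Z_2].
  exists f; split.
  + move=> x y /ffunP Hxy.
    have Hr : rw x = rw y.
      apply: (row_free_inj (row_base_free K)); apply/rowP => i.
      by have := Hxy i; rewrite !ffunE.
    apply/ffunP => i.
    have := congr1 (fun r : 'rV_(\rank K) => r 0 (cast_ord (esym e) i)) Hr.
    by rewrite /= !mxE cast_ordKV.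
  + move=> x y; apply/ffunP => i; rewrite !ffunE.
    have -> : rw (x + y) = rw x + rw y by apply/rowP => k; rewrite !mxE !ffunE.
    by rewrite mulmxDl mxE.
  + move=> phi; rewrite inE; split.
    * move/forallP => Hphi.
      have : ((\row_i (phi i : 'F_2)) <= B)%MS.
        rewrite eq_row_base; apply/sub_kermxP; apply/rowP => j.
        by rewrite mulDm mxE; apply/eqP; exact: (Hphi j).
      case/submxP => y Hy.
      exists [ffun k => (y 0 (cast_ord (esym e) k) : 'Z_2)].
      apply/ffunP => i; rewrite ffunE.
      have -> : rw [ffun k => (y 0 (cast_ord (esym e) k) : 'Z_2)] = y.
        by apply/rowP => k; rewrite !mxE ffunE cast_ordK.
      by rewrite -Hy mxE.
    * case=> x <-; apply/forallP => j; apply/eqP.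
      have <- := mulDm rels (fun i => (f x i : 'F_2)) j.
      have -> : (\row_i (f x i : 'F_2)) = rw x *m B.
        by apply/rowP => i; rewrite [LHS]mxE /f ffunE.
      have HB : (B <= K)%MS by rewrite eq_row_base.
      by rewrite -mulmxA (sub_kermxP HB) mulmx0 mxE.
- move=> alpha; rewrite inE => /forallP Ha.
  by apply: (lift2 oN HN) => j; apply/eqP; exact: (Ha j).
Qed.
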